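(* Let $G$ be the free group on $\{x,y\}$ and $k$ a field. Then the $k$-subalgebra of $k[G]$ generated by $x+x^{-1}$ and $y+y^{-1}$ is the free $k$-algebra on $\{x+x^{-1},y+y^{-1}\}$.
   Context: The free $k$-algebra on a set $X$ is the algebra of noncommutative polynomials in the variables $X$. *)

(* Defs.v *)
From HB Require Import structures.
From mathcomp Require Import all_boot all_order all_algebra.
Set Implicit Arguments. Unset Strict Implicit. Unset Printing Implicit Defensive.
Import GRing.Theory.
Local Open Scope ring_scope.

(* A letter is (generator, inverted?): generator false = x, true = y;
   inverted = true means the inverse generator. *)
Definition letter := (bool * bool)%type.
Definition linv (l : letter) : letter := (l.1, ~~ l.2).

Definition push (l : letter) (w : seq letter) : seq letter :=
  match w with
  | l' :: w' => if l' == linv l then w' else l :: w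
  | [::] => [:: l]
  end.

Definition nf (w : seq letter) : seq letter := foldr push [::] w.

(* elements of G are the reduced words (nf w == w); group product *)
Definition reducedw (w : seq letter) : bool := nf w == w.
Definition gmul (u v : seq letter) : seq letter := nf (u ++ v).

Definition gx : seq letter := [:: (false, false)].
Definition gxinv : seq letter := [:: (false, true)].
Definition gy : seq letter := [:: (true, false)].
Definition gyinv : seq letter := [:: (true, true)].

(* An element of k[G] is given by a finite formal sum \sum c_i g_i,
   represented as a list of pairs (c_i, w_i); the coefficient of the group
   element g (a reduced word) is the sum of the c_i with nf w_i = g. Two
   representations denote the same element of k[G] iff all coefficients agree. *)
Definition kG (k : fieldType) := seq (k * seq letter).

Definition coefG (k : fieldType) (f : kG k) (g : seq letter) : k :=
  \sum_(p <- f | nf p.2 == g) p.1.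

Definition mulG (k : fieldType) (f h : kG k) : kG k :=
  [seq (a.1 * b.1, gmul a.2 b.2) | a <- f, b <- h].

Definition oneG (k : fieldType) : kG k := [:: (1, [::])].

Definition aG (k : fieldType) : kG k := [:: (1, gx); (1, gxinv)].
Definition bG (k : fieldType) : kG k := [:: (1, gy); (1, gyinv)].

(* Noncommutative polynomials: finite formal sums of monomials (words over
   {X, Y}, false = X, true = Y); coefficient of word w is the sum of the
   coefficients listed with w. *)
Definition kXY (k : fieldType) := seq (k * seq bool).

Definition coefF (k : fieldType) (p : kXY k) (w : seq bool) : k :=
  \sum_(q <- p | q.2 == w) q.1.

Definition evalword (k : fieldType) (w : seq bool) : kG k :=
  foldr (fun c acc => mulG (if c then bG k else aG k) acc) (oneG k) w.

Definition evalF (k : fieldType) (p : kXY k) : kG k :=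
  flatten [seq [seq (q.1 * r.1, r.2) | r <- evalword k q.2] | q <- p].

(* Main.v *)
Require Import Defs.
From mathcomp Require Import all_boot all_order all_algebra.
Local Open Scope ring_scope.

Module Aux.
Set Implicit Arguments. Unset Strict Implicit. Unset Printing Implicit Defensive.
Import GRing.Theory.

Lemma size_push l u : (size (push l u) <= (size u).+1)%N.
Proof. case: u => [|l' u] //=; case: ifP => //= _; exact: leqW. Qed.

Lemma size_nf u : (size (nf u) <= size u)%N.
Proof.
elim: u => [|l u IH] //=; apply: leq_trans (size_push _ _) _; by rewrite ltnS.
Qed.

Lemma reducedC l u : nf (l :: u) = l :: u -> nf u = u.
Proof.
rewrite /=; case E: (nf u) => [|l' z] /=.
  by case=> <-.
case: ifP => _.
  move=> Ez; have := size_nf u; rewrite E Ez /=.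
  by move=> H; have := leq_trans (leqnSn _) H; rewrite ltnn.
by case=> <-.
Qed.

Lemma nf_push l u : nf u = u -> nf (push l u) = push l u.
Proof.
case: u => [|l' u] //= Hu.
case: ifP => E; first exact: reducedC Hu.
by rewrite /= Hu /= E.
Qed.

Lemma gmul1 l u : nf u = u -> gmul [:: l] u = push l u.
Proof. by rewrite /gmul /= => ->. Qed.

Section S.
Variable k : fieldType.

Lemma evalword_cons c v : evalword k (c :: v) =
  mulG [:: (1, [:: (c, false)]); (1, [:: (c, true)])] (evalword k v).
Proof. by case: c. Qed.

Lemma L1 v b : b \in evalword k v -> nf b.2 = b.2 /\ (size b.2 <= size v)%N.
Proof.
elim: v b => [|c v IH] b.
  by rewrite /= inE => /eqP ->.
rewrite evalword_cons /mulG => /allpairsP [[a b'] /= [Ha Hb ->]] /=.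
have [Hn Hs] := IH _ Hb.
move: Ha; rewrite !inE => /orP [] /eqP -> /=; rewrite gmul1 //;
  (split; [exact: nf_push | exact: leq_trans (size_push _ _) _]).
Qed.

Lemma coefG_cons c v g : coefG (evalword k (c :: v)) g =
  \sum_(b <- evalword k v | push (c, false) b.2 == g) b.1 +
  \sum_(b <- evalword k v | push (c, true) b.2 == g) b.1.
Proof.
rewrite evalword_cons /mulG /coefG /= cats0 big_cat !big_map /=.
congr (_ + _); rewrite big_seq_cond [in RHS]big_seq_cond;
  (apply: eq_big => b; [case Hb: (b \in _) => //=; have [Hn _] := L1 Hb;
   by rewrite gmul1 // nf_push | move=> _; exact: mul1r]).
Qed.
End S.

Section S.
Variable k : fieldType.

Definition gpos (w : seq bool) : seq letter := [seq (c, false) | c <- w].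

Lemma coefG_ev v g :
  coefG (evalword k v) g = \sum_(b <- evalword k v | b.2 == g) b.1.
Proof.
rewrite /coefG big_seq_cond [RHS]big_seq_cond; apply: eq_bigl => b.
by case Hb: (b \in _) => //=; have [-> _] := L1 Hb.
Qed.

Lemma L3 v g : (size v < size g)%N -> coefG (evalword k v) g = 0.
Proof.
move=> Hs; rewrite coefG_ev big_seq_cond big_pred0 // => b.
apply/negbTE/andP => [[/L1 [_ H] /eqP E]].
by move: (leq_ltn_trans H Hs); rewrite E ltnn.
Qed.

Lemma push_pos c d u w : (size u <= size w)%N ->
  (push (c, false) u == (d, false) :: gpos w) = (c == d) && (u == gpos w).
Proof.
case: u => [|l' z] /= Hs.
  by rewrite eqseq_cons xpair_eqE eqxx andbT.
case: ifP => E.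
  move/eqP: E => -> /=.
  apply/idP/idP.
    move/eqP => Ez; move: Hs; rewrite Ez /= /gpos size_map => H.
    by have := leq_trans (leqnSn _) H; rewrite ltnn.
  case/andP => _; case: w Hs => [|e w] //= _.
  by rewrite eqseq_cons xpair_eqE /= andbF.
by rewrite eqseq_cons xpair_eqE eqxx andbT.
Qed.

Lemma push_neg c d u w : (size u <= size w)%N ->
  (push (c, true) u == (d, false) :: gpos w) = false.
Proof.
case: u => [|l' z] /= Hs.
  by rewrite eqseq_cons xpair_eqE /= andbF.
case: ifP => E.
  apply/negbTE/negP => /eqP Ez; move: Hs; rewrite Ez /= /gpos size_map => H.
  by have := leq_trans (leqnSn _) H; rewrite ltnn.
by rewrite eqseq_cons xpair_eqE /= andbF.
Qed.

Lemma L2 w v : size v = size w -> coefG (evalword k v) (gpos w) = (v == w)%:R.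
Proof.
elim: w v => [|d w IH] [|c v] //=.
  by move=> _; rewrite /coefG big_cons big_nil /= addr0.
case=> Hs; rewrite coefG_cons.
rewrite [X in _ + X]big_seq_cond [X in _ + X]big_pred0; last first.
  move=> b; case Hb: (b \in _) => //=; have [_ H] := L1 Hb.
  by rewrite push_neg // -Hs.
rewrite addr0 big_seq_cond.
rewrite (eq_bigl (fun b => (c == d) && ((b \in evalword k v) && (b.2 == gpos w)))); last first.
  move=> b; case Hb: (b \in _) => /=; last by rewrite andbF.
  have [_ H] := L1 Hb; by rewrite push_pos // -Hs.
rewrite eqseq_cons; case: (c == d) => /=; last by rewrite big_pred0.
by rewrite -big_seq_cond -coefG_ev IH.
Qed.
End S.

Section S.
Variable k : fieldType.

Lemma lin (p : kXY k) g :
  coefG (evalF p) g = \sum_(q <- p) q.1 * coefG (evalword k q.2) g.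
Proof.
rewrite /coefG /evalF big_flatten big_map; apply: eq_bigr => q _.
by rewrite big_map mulr_sumr.
Qed.

Lemma group (p : kXY k) (F : seq bool -> k) :
  \sum_(q <- p) q.1 * F q.2 =
  \sum_(u <- undup (map snd p)) coefF p u * F u.
Proof.
under [RHS]eq_bigr => u _ do rewrite /coefF mulr_suml.
under [RHS]eq_bigr => u _ do rewrite big_mkcond.
rewrite exchange_big /= big_seq [RHS]big_seq; apply: eq_bigr => q Hp.
have Hq : q.2 \in undup (map snd p) by rewrite mem_undup map_f.
rewrite (bigD1_seq q.2) ?undup_uniq //= eqxx big1 ?addr0 // => u /negbTE Hu.
by rewrite eq_sym Hu.
Qed.

Theorem main_aux (p : kXY k) :
  (forall g : seq letter, coefG (evalF p) g = 0) ->
  forall w : seq bool, coefF p w = 0.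
Proof.
move=> H0.
set M := \max_(q <- p) size q.2.
suff: forall n w, (M < size w + n)%N -> coefF p w = 0.
  by move=> Hn w; apply: (Hn M.+1); rewrite addnS ltnS leq_addl.
elim=> [|n IH] w Hw.
  rewrite /coefF big_seq_cond big_pred0 // => q.
  apply/negbTE/andP => [[Hq /eqP E]].
  have : (size q.2 <= M)%N by apply: (@leq_bigmax_seq _ _ _ (fun q => size q.2)).
  by rewrite E leqNgt -(addn0 (size w)) Hw.
have := H0 (gpos w); rewrite lin (group p (fun u => coefG (evalword k u) (gpos w))).
have Hu u : u \in undup (map snd p) -> u != w ->
    coefF p u * coefG (evalword k u) (gpos w) = 0.
  move=> _ Huw; case: (ltngtP (size u) (size w)) => Hs.
  - by rewrite L3 ?mulr0 // /gpos size_map.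
  - by rewrite IH ?mul0r // (leq_trans Hw) // addnS -addSn leq_add2r.
  - by rewrite L2 // (negbTE Huw) mulr0.
case: (boolP (w \in undup (map snd p))) => Hw2.
  rewrite (bigD1_seq w) ?undup_uniq //= L2 // eqxx mulr1 big_seq_cond big1 ?addr0 //.
  by move=> u /andP [Hu1 Hu2]; apply: Hu.
move=> _; rewrite /coefF big_seq_cond big_pred0 // => q.
apply/negbTE/andP => [[Hq /eqP E]]; move: Hw2.
by rewrite mem_undup -E map_f.
Qed.
End S.
End Aux.

Theorem mainTheorem5 (k : fieldType) (p : kXY k) :
  (forall g : seq letter, coefG (evalF p) g = 0) ->
  forall w : seq bool, coefF p w = 0.
Proof. exact: Aux.main_aux. Qed.
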